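(* Fix $p\in[0,1]$ and let $(G_n)$ be a sequence of graphs with $\min_{u\in V}\delta_u=\omega(\log n)$. For each $n$ and $k$, run the $(k,p,\mathcal B)$-Edge-Majority dynamics on $G_n$ from the configuration in which every node is $\mathcal R$, and let $\mathbf P_k$ denote its law. For every $\gamma>0$ there exists $H=H(p,\gamma)$ such that: (Fast disruption) if $p>1/2$, then for all $k>H$, $\mathbf P_k\big(\mathrm{vol}(B^{(1)})/\mathrm{vol}(V)\ge1-\gamma\big)=1-o(1)$; (Slow disruption) if $p<1/2$, then for all $k>H$ and $K>0$, $\mathbf P_k\big(\forall t\in[0,n^K]:\ \mathrm{vol}(R^{(t)})/\mathrm{vol}(V)\ge1-\gamma\big)=1-o(1)$.
   Context: $G_n=(V,E)$, $V=\{1,\dots,n\}$, $N(u)$ neighbourhood, $\delta_u=|N(u)|$, $\mathrm{vol}(S)=\sum_{v\in S}\delta_v$; $o(1)$ refers to $n\to\infty$ for fixed $k$. States in $\{\mathcal R,\mathcal B\}$; $R^{(t)},B^{(t)}$ are the sets of nodes in each state at round $t$. $(k,p,\mathcal B)$-Edge-Majority: in each round $t\ge1$ every node $u$ independently samples $k$ neighbours uniformly at random with replacement; for each sampled $v$, independently, $u$ sees $v$ as $\mathcal B$ with probability $p$ and otherwise sees $v$'s true state at round $t-1$; $u$ adopts the state seen more often, ties broken uniformly at random. *)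

(* Defs.v *)
From HB Require Import structures.
From mathcomp Require Import all_boot all_order all_algebra.
From mathcomp Require Import all_classical all_reals all_analysis.
Set Implicit Arguments. Unset Strict Implicit. Unset Printing Implicit Defensive.
Import Order.TTheory GRing.Theory Num.Theory.
Local Open Scope ring_scope.

Definition simple_graph (n : nat) (G : rel 'I_n) : Prop :=
  (forall u v, G u v = G v u) /\ (forall u, ~~ G u u).

Definition nbhd (n : nat) (G : rel 'I_n) (u : 'I_n) : {set 'I_n} := [set v | G u v].
Definition deg (n : nat) (G : rel 'I_n) (u : 'I_n) : nat := #|nbhd G u|.
Definition vol (n : nat) (G : rel 'I_n) (S : {set 'I_n}) : nat := (\sum_(v in S) deg G v)%N.

(* A configuration is the set of nodes in state B; the others are in state R. *)

Section Dyn.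
Variables (R : realType) (n : nat) (G : rel 'I_n) (p : R) (k : nat).

(* One sample of node u: a neighbour v (uniform in N(u)) and a noise flag c
   (true with probability p, meaning "v is seen as B"; otherwise v's true
   state is seen). *)
Definition sample_weight (u : 'I_n) (s : 'I_n * bool) : R :=
  (if s.1 \in nbhd G u then (deg G u)%:R^-1 else 0) * (if s.2 then p else 1 - p).

Definition seen_blue (X : {set 'I_n}) (s : 'I_n * bool) : bool := s.2 || (s.1 \in X).

(* Probability that u adopts B given the outcome f of its k samples:
   majority of seen states, ties broken uniformly at random. *)
Definition adopt_blue (X : {set 'I_n}) (f : {ffun 'I_k -> 'I_n * bool}) : R :=
  let c := #|[set j | seen_blue X (f j)]| in
  if (c > k - c)%N then 1 else if (c < k - c)%N then 0 else 2^-1.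

Definition prob_blue (X : {set 'I_n}) (u : 'I_n) : R :=
  \sum_(f : {ffun 'I_k -> 'I_n * bool})
     (\prod_(j < k) sample_weight u (f j)) * adopt_blue X f.

Definition trans (X Y : {set 'I_n}) : R :=
  \prod_(u : 'I_n) (if u \in Y then prob_blue X u else 1 - prob_blue X u).

(* Probability, starting from X at round 0, that the configurations at rounds
   0, 1, ..., T all satisfy [good]. *)
Fixpoint prob_always (good : pred {set 'I_n}) (T : nat) (X : {set 'I_n}) : R :=
  match T with
  | 0 => (good X)%:R
  | T'.+1 => (good X)%:R * \sum_(Y : {set 'I_n}) trans X Y * prob_always good T' Y
  end.

Definition prob_round1 (E : pred {set 'I_n}) (X : {set 'I_n}) : R :=
  \sum_(Y : {set 'I_n} | E Y) trans X Y.

End Dyn.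

Definition vol_frac (R : realType) (n : nat) (G : rel 'I_n) (S : {set 'I_n}) : R :=
  (vol G S)%:R / (vol G [set: 'I_n])%:R.

(* Main.v *)
Require Import Defs.
From HB Require Import structures.
From mathcomp Require Import all_boot all_order all_algebra.
From mathcomp Require Import all_classical all_reals all_analysis.
From mathcomp Require Import ring lra zify.
Import Order.TTheory GRing.Theory Num.Theory.
Local Open Scope ring_scope.
Set Implicit Arguments. Unset Strict Implicit.
Lemma sum_set_prod (R : realType) (I : finType) (F G : I -> R) :
  \sum_(Y : {set I}) \prod_i (if i \in Y then F i else G i) = \prod_i (F i + G i).
Proof.
have -> : \prod_i (F i + G i) = \prod_i \sum_(b : bool) (if b then F i else G i).
  by apply eq_bigr => i _; rewrite big_bool.
rewrite bigA_distr_bigA /=.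
rewrite (reindex (fun Y : {set I} => [ffun i => i \in Y])) /=.
  by apply eq_bigr => Y _; apply eq_bigr => i _; rewrite ffunE.
exists (fun f : {ffun I -> bool} => [set i | f i]) => Y _ /=.
  by apply/setP => i; rewrite inE ffunE.
by apply/ffunP => i; rewrite ffunE inE.
Qed.

Lemma sum_ffun_pow (R : realType) (T : finType) (k : nat) (w : T -> R) (P : pred T) (x : R) :
  \sum_(f : {ffun 'I_k -> T}) (\prod_(j < k) w (f j)) * x ^+ #|[set j | P (f j)]| =
  (\sum_s w s * (if P s then x else 1)) ^+ k.
Proof.
transitivity (\prod_(j < k) \sum_s w s * (if P s then x else 1)).
  rewrite bigA_distr_bigA; apply eq_bigr => f _.
  rewrite -prodr_const big_split /=; congr (_ * _).
  by rewrite big_mkcond; apply eq_bigr => j _; rewrite inE.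
by rewrite prodr_const card_ord.
Qed.

Lemma sum_split_if (R : realType) (T : finType) (w : T -> R) (P : pred T) (x : R) :
  \sum_s w s * (if P s then x else 1) = \sum_s w s + (x - 1) * \sum_s (if P s then w s else 0).
Proof.
rewrite mulr_sumr -big_split; apply eq_bigr => s _; case: (P s) => /=; ring.
Qed.

Lemma tail_bound (R : realType) (T : finType) (k : nat) (w : T -> R) (P : pred T)
  (a : {ffun 'I_k -> T} -> R) (x : R) :
  (forall s, 0 <= w s) -> 1 <= x ->
  (forall f, a f <= (if (k <= 2 * #|[set j | P (f j)]|)%N then 1 else 0)) ->
  \sum_(f : {ffun 'I_k -> T}) (\prod_(j < k) w (f j)) * a f <=
  (\sum_s w s * (if P s then x ^+ 2 else 1)) ^+ k / x ^+ k.
Proof.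
move=> w0 x1 ha.
have xk0 : 0 < x ^+ k by apply: exprn_gt0; lra.
rewrite -sum_ffun_pow mulr_suml; apply: ler_sum => f _.
rewrite -mulrA; apply: ler_wpM2l; first by apply: prodr_ge0.
apply: (le_trans (ha f)).
case: ifP => hk.
  rewrite ler_pdivlMr // mul1r -exprM; exact: ler_weXn2l.
apply: divr_ge0; last by apply: ltW.
apply: exprn_ge0; apply: exprn_ge0; lra.
Qed.

Lemma sum_ind (R : realType) (I : finType) (A : {set I}) (c : R) :
  \sum_v (if v \in A then c else 0) = #|A|%:R * c.
Proof. by rewrite -big_mkcond sumr_const mulr_natl. Qed.

Lemma sw_ge0 (R : realType) n (G : rel 'I_n) (p : R) u s :
  0 <= p -> p <= 1 -> 0 <= sample_weight G p u s.
Proof.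
move=> p0 p1; rewrite /sample_weight; apply: mulr_ge0.
  by case: ifP => // _; rewrite invr_ge0.
by case: ifP => _ //; lra.
Qed.

Lemma sw_blue (R : realType) n (G : rel 'I_n) (p : R) u (X : {set 'I_n}) :
  (0 < deg G u)%N ->
  \sum_s (if seen_blue X s then sample_weight G p u s else 0) =
  p + (1 - p) * (#|nbhd G u :&: X|%:R / (deg G u)%:R).
Proof.
move=> d0.
rewrite -(pair_bigA _ (fun v b => if seen_blue X (v, b) then sample_weight G p u (v, b) else 0)) /=.
under eq_bigr => v _ do rewrite big_bool /seen_blue /sample_weight /=.
have H : forall v, (if v \in nbhd G u then (deg G u)%:R^-1 else 0) * p +
   (if v \in X then (if v \in nbhd G u then (deg G u)%:R^-1 else 0) * (1 - p) else 0)
   = (if v \in nbhd G u then p / (deg G u)%:R else 0) +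
     (if v \in nbhd G u :&: X then (1 - p) / (deg G u)%:R else 0).
  move=> v; rewrite !inE; case: (G u v); case: (v \in X) => /=; rewrite ?mul0r ?addr0 ?add0r //; ring.
rewrite (eq_bigr _ (fun v _ => H v)) big_split /= !sum_ind.
have dp : ((deg G u)%:R : R) != 0 by rewrite pnatr_eq0 -lt0n.
by rewrite /deg in dp *; field.
Qed.

Lemma sw_total (R : realType) n (G : rel 'I_n) (p : R) u :
  (0 < deg G u)%N -> \sum_s sample_weight G p u s = 1.
Proof.
move=> d0; have := @sw_blue R n G p u [set: 'I_n] d0.
rewrite finset.setIT /deg divff; last by rewrite pnatr_eq0 -lt0n.
rewrite mulr1 addrC subrK => <-; apply: eq_bigr => s _.
by rewrite /seen_blue finset.in_setT orbT.
Qed.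

Lemma card_setC_pred (k : nat) (P : pred 'I_k) :
  (#|[set j | P j]| + #|[set j | ~~ P j]|)%N = k.
Proof.
have -> : [set j | ~~ P j] = ~: [set j | P j] by apply/setP => j; rewrite !inE.
by rewrite cardsC card_ord.
Qed.

Lemma adopt_props (R : realType) n k (X : {set 'I_n}) (f : {ffun 'I_k -> 'I_n * bool}) :
  [/\ 0 <= adopt_blue R X f, adopt_blue R X f <= 1,
   adopt_blue R X f <= (if (k <= 2 * #|[set j | seen_blue X (f j)]|)%N then 1 else 0) &
   1 - adopt_blue R X f <= (if (k <= 2 * #|[set j | ~~ seen_blue X (f j)]|)%N then 1 else 0)].
Proof.
have := card_setC_pred (fun j : 'I_k => seen_blue X (f j)).
rewrite /adopt_blue.
set c := #|[set j | seen_blue X (f j)]|; set c' := #|[set j | ~~ seen_blue X (f j)]| => hc.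
case: (ltngtP (k - c) c) => h.
- have -> : (k <= 2 * c)%N = true by lia.
  have -> : (k <= 2 * c')%N = false by lia.
  split; lra.
- have -> : (k <= 2 * c)%N = false by lia.
  have -> : (k <= 2 * c')%N = true by lia.
  split; lra.
- have -> : (k <= 2 * c)%N = true by lia.
  have -> : (k <= 2 * c')%N = true by lia.
  split; lra.
Qed.

Lemma sum_prod_w (R : realType) n (G : rel 'I_n) (p : R) k u :
  (0 < deg G u)%N ->
  \sum_(f : {ffun 'I_k -> 'I_n * bool}) \prod_(j < k) sample_weight G p u (f j) = 1.
Proof.
move=> d0; have := @sum_ffun_pow R _ k (sample_weight G p u) predT 1.
under eq_bigr => f _ do rewrite expr1n mulr1.
move=> ->; under eq_bigr => s _ do rewrite (if_same (predT s) (1:R)) mulr1.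
by rewrite sw_total // expr1n.
Qed.

Lemma pb_range (R : realType) n (G : rel 'I_n) (p : R) k X u :
  0 <= p -> p <= 1 -> (0 < deg G u)%N ->
  0 <= prob_blue G p k X u <= 1.
Proof.
move=> p0 p1 d0; apply/andP; split.
  apply: sumr_ge0 => f _; apply: mulr_ge0; first by apply: prodr_ge0 => j _; apply: sw_ge0.
  by case: (adopt_props R X f).
rewrite -(sum_prod_w p k d0); apply: ler_sum => f _.
rewrite -[X in _ <= X]mulr1; apply: ler_wpM2l; first by apply: prodr_ge0 => j _; apply: sw_ge0.
by case: (adopt_props R X f).
Qed.

Lemma pb_blue_tail (R : realType) n (G : rel 'I_n) (p : R) k X u (x : R) :
  0 <= p -> p <= 1 -> (0 < deg G u)%N -> 1 <= x ->
  prob_blue G p k X u <=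
  (1 + (x ^+ 2 - 1) * \sum_s (if seen_blue X s then sample_weight G p u s else 0)) ^+ k / x ^+ k.
Proof.
move=> p0 p1 d0 x1.
rewrite -[X in (X + _) ^+ _](sw_total p d0) -sum_split_if.
apply: tail_bound => //; first by move=> s; apply: sw_ge0.
by move=> f; case: (adopt_props R X f).
Qed.

Lemma pb_red_tail (R : realType) n (G : rel 'I_n) (p : R) k X u (x : R) :
  0 <= p -> p <= 1 -> (0 < deg G u)%N -> 1 <= x ->
  1 - prob_blue G p k X u <=
  (1 + (x ^+ 2 - 1) * (1 - \sum_s (if seen_blue X s then sample_weight G p u s else 0))) ^+ k / x ^+ k.
Proof.
move=> p0 p1 d0 x1.
have -> : 1 - \sum_s (if seen_blue X s then sample_weight G p u s else 0) =
          \sum_s (if ~~ seen_blue X s then sample_weight G p u s else 0).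
  rewrite -[X in X - _](sw_total p d0) -sumrB; apply: eq_bigr => s _; case: ifP => _ /=; ring.
rewrite -[X in (X + _) ^+ _](sw_total p d0) -sum_split_if.
have -> : 1 - prob_blue G p k X u =
  \sum_(f : {ffun 'I_k -> 'I_n * bool}) (\prod_(j < k) sample_weight G p u (f j)) * (1 - adopt_blue R X f).
  rewrite -[X in X - _](sum_prod_w p k d0) /prob_blue -sumrB; apply: eq_bigr => f _; ring.
apply: tail_bound => //; first by move=> s; apply: sw_ge0.
by move=> f; case: (adopt_props R X f).
Qed.

Lemma chern (R : realType) n (a b : 'I_n -> R) (N : {set 'I_n}) (m : nat) (r : R) :
  (forall v, 0 <= a v) -> (forall v, 0 <= b v) -> (forall v, a v + b v = 1) ->
  (forall v, a v <= r) ->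
  \sum_(Y : {set 'I_n} | (#|N| <= m * #|N :&: Y|)%N) \prod_v (if v \in Y then a v else b v)
   <= ((1 + r * (2 ^+ m - 1)) / 2) ^+ #|N|.
Proof.
move=> a0 b0 ab ar.
set t : R := 2 ^+ m.
have t1 : 1 <= t by rewrite /t exprn_ege1 //; lra.
have p0 : forall Y : {set 'I_n}, 0 <= \prod_v (if v \in Y then a v else b v).
  by move=> Y; apply: prodr_ge0 => v _; case: ifP.
have d0 : 0 < (2 : R) ^+ #|N| by apply: exprn_gt0; lra.
apply: (@le_trans _ _ (\sum_(Y : {set 'I_n}) \prod_v (if v \in Y then a v else b v) * (t ^+ #|N :&: Y| / 2 ^+ #|N|))).
  rewrite [X in X <= _]big_mkcond /=; apply: ler_sum => Y _; case: ifP => h.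
    rewrite -[X in X <= _]mulr1; apply: ler_wpM2l => //.
    rewrite ler_pdivlMr // mul1r /t -exprM; apply: ler_weXn2l => //; lra.
  apply: mulr_ge0 => //; apply: divr_ge0; [apply: exprn_ge0; lra | exact: ltW].
have E : forall Y : {set 'I_n}, \prod_v (if v \in Y then a v else b v) * (t ^+ #|N :&: Y| / 2 ^+ #|N|)
   = \prod_v (if v \in Y then a v * (if v \in N then t else 1) else b v) / 2 ^+ #|N|.
  move=> Y; rewrite mulrA; congr (_ / _).
  rewrite -prodr_const [X in _ * X = _]big_mkcond /= -big_split /=; apply: eq_bigr => v _.
  by rewrite !inE; case: (v \in Y); case: (v \in N); rewrite /= ?mulr1.
rewrite (eq_bigr _ (fun Y _ => E Y)) -mulr_suml sum_set_prod.
rewrite expr_div_n; apply: ler_wpM2r; first by rewrite invr_ge0; apply: ltW.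
rewrite -prodr_const [X in _ <= X]big_mkcond /=; apply: ler_prod => v _.
apply/andP; split.
  apply: addr_ge0 => //; apply: mulr_ge0 => //; case: ifP => _; lra.
have := ab v; have := ar v; have := a0 v.
case: ifP => _ h1 h2 h3; last by lra.
have : a v * (t - 1) <= r * (t - 1) by apply: ler_wpM2r => //; lra.
lra.
Qed.

Lemma union_bound (R : realType) (I T : finType) (Q : I -> pred T) (F : T -> R) :
  (forall Y, 0 <= F Y) ->
  \sum_(Y | ~~ [forall u, ~~ Q u Y]) F Y <= \sum_u \sum_(Y | Q u Y) F Y.
Proof.
move=> F0.
rewrite big_mkcond /= (eq_bigr (fun u => \sum_Y (if Q u Y then F Y else 0))); last by move=> u _; rewrite big_mkcond.
rewrite (exchange_big) /=; apply: ler_sum => Y _.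
case: ifP => h; last by apply: sumr_ge0 => u _; case: ifP.
move: h; rewrite negb_forall => /existsP [u]; rewrite negbK => hu.
rewrite (bigD1 u) //= hu -[X in X <= _]addr0; apply: lerD => //.
by apply: sumr_ge0 => v _; case: ifP.
Qed.

Lemma trans_ge0 (R : realType) n (G : rel 'I_n) (p : R) k X Y :
  0 <= p -> p <= 1 -> (forall u, (0 < deg G u)%N) -> 0 <= trans G p k X Y.
Proof.
move=> p0 p1 d0; apply: prodr_ge0 => u _.
have /andP[h1 h2] := pb_range k X p0 p1 (d0 u).
case: ifP => _ //; lra.
Qed.

Lemma trans_sum1 (R : realType) n (G : rel 'I_n) (p : R) k X :
  \sum_Y trans G p k X Y = 1.
Proof.
rewrite /trans sum_set_prod; apply: big1 => u _; ring.
Qed.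

Lemma chern_blue (R : realType) n (G : rel 'I_n) (p : R) k X u (m : nat) (r : R) :
  0 <= p -> p <= 1 -> (forall u, (0 < deg G u)%N) ->
  (forall v, prob_blue G p k X v <= r) ->
  \sum_(Y | (deg G u <= m * #|nbhd G u :&: Y|)%N) trans G p k X Y
   <= ((1 + r * (2 ^+ m - 1)) / 2) ^+ deg G u.
Proof.
move=> p0 p1 d0 hr; rewrite /trans /deg.
apply: chern => // v; have /andP[h1 h2] := pb_range k X p0 p1 (d0 v); lra.
Qed.

Lemma chern_red (R : realType) n (G : rel 'I_n) (p : R) k X u (m : nat) (r : R) :
  0 <= p -> p <= 1 -> (forall u, (0 < deg G u)%N) ->
  (forall v, 1 - prob_blue G p k X v <= r) ->
  \sum_(Y | (deg G u <= m * #|nbhd G u :&: ~: Y|)%N) trans G p k X Y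
   <= ((1 + r * (2 ^+ m - 1)) / 2) ^+ deg G u.
Proof.
move=> p0 p1 d0 hr; rewrite /trans /deg.
rewrite (reindex_inj (@finset.setC_inj _)) /=.
under eq_bigl => Y do rewrite finset.setCK.
under eq_bigr => Y _ do under eq_bigr => v _ do rewrite inE if_neg.
apply: chern => // v; have /andP[h1 h2] := pb_range k X p0 p1 (d0 v); lra.
Qed.

Lemma card_sum (I : finType) (A : {set I}) : #|A| = (\sum_v (if v \in A then 1 else 0))%N.
Proof. by rewrite -sum1_card big_mkcond. Qed.

Lemma vol_nbhd n (G : rel 'I_n) (X : {set 'I_n}) :
  simple_graph G -> vol G X = (\sum_u #|nbhd G u :&: X|)%N.
Proof.
move=> [sym _]; rewrite /vol /deg.
under eq_bigr => v _ do rewrite card_sum.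
rewrite exchange_big /=; apply: eq_bigr => u _.
rewrite card_sum big_mkcond /=; apply: eq_bigr => v _.
by rewrite !inE sym; case: (v \in X); case: (G u v).
Qed.

Lemma vol_split n (G : rel 'I_n) (S : {set 'I_n}) :
  (vol G S + vol G (~: S))%N = vol G [set: 'I_n].
Proof.
rewrite /vol [in RHS](bigID (fun v => v \in S)) /=; congr (_ + _)%N.
  by apply: eq_bigl => v; rewrite finset.in_setT.
by apply: eq_bigl => v; rewrite finset.in_setT inE.
Qed.

Lemma vol_frac_bound (R : realType) n (G : rel 'I_n) (S : {set 'I_n}) (m : nat) :
  simple_graph G -> (0 < vol G [set: 'I_n])%N -> (0 < m)%N ->
  (forall u, m * #|nbhd G u :&: S| <= deg G u)%N ->
  1 - m%:R^-1 <= vol_frac R G (~: S).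
Proof.
move=> sg v0 m0 h.
have hv : (m * vol G S <= vol G [set: 'I_n])%N.
  rewrite vol_nbhd // big_distrr /=.
  have -> : vol G [set: 'I_n] = (\sum_u deg G u)%N.
    by rewrite /vol; apply: eq_bigl => v; rewrite finset.in_setT.
  by apply: leq_sum => u _; apply: h.
have := vol_split G S.
rewrite /vol_frac.
move: hv; set a := vol G S; set b := vol G (~: S); set c := vol G [set: 'I_n] => hv hs.
have hc : (0 : R) < c%:R by rewrite ltr0n.
have hm : (0 : R) < m%:R by rewrite ltr0n.
have hv' : (m%:R * a%:R <= c%:R :> R) by rewrite -natrM ler_nat.
have hs' : (a%:R + b%:R = c%:R :> R) by rewrite -natrD hs.
rewrite ler_pdivlMr //.
have : a%:R <= c%:R / m%:R :> R by rewrite ler_pdivlMr // mulrC.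
have -> : c%:R / m%:R = m%:R^-1 * c%:R :> R by rewrite mulrC.
nra.
Qed.

Lemma pa_ge0 (R : realType) n (G : rel 'I_n) (p : R) k good T X :
  0 <= p -> p <= 1 -> (forall u, (0 < deg G u)%N) -> 0 <= prob_always G p k good T X.
Proof.
move=> p0 p1 d0; elim: T X => [|T IH] X /=; first by case: (good X).
apply: mulr_ge0; first by case: (good X).
by apply: sumr_ge0 => Y _; apply: mulr_ge0; [apply: trans_ge0 | apply: IH].
Qed.

Lemma pa_bound (R : realType) n (G : rel 'I_n) (p : R) k (good Inv : pred {set 'I_n}) (dl : R) :
  0 <= p -> p <= 1 -> (forall u, (0 < deg G u)%N) -> 0 <= dl ->
  (forall X, Inv X -> good X) ->
  (forall X, Inv X -> \sum_(Y | ~~ Inv Y) trans G p k X Y <= dl) ->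
  forall T X, Inv X -> 1 - T%:R * dl <= prob_always G p k good T X.
Proof.
move=> p0 p1 d0 dl0 hg hd; elim => [|T IH] X hX /=.
  by rewrite hg // mul0r subr0.
rewrite hg // mul1r.
have hs := trans_sum1 G p k X.
rewrite (bigID Inv) /= in hs.
rewrite (bigID Inv) /=.
have h2 : 0 <= \sum_(Y | ~~ Inv Y) trans G p k X Y * prob_always G p k good T Y.
  by apply: sumr_ge0 => Y _; apply: mulr_ge0; [apply: trans_ge0 | apply: pa_ge0].
have h1 : \sum_(Y | Inv Y) trans G p k X Y * (1 - T%:R * dl) <=
          \sum_(Y | Inv Y) trans G p k X Y * prob_always G p k good T Y.
  apply: ler_sum => Y hY; apply: ler_wpM2l; first by apply: trans_ge0.
  exact: IH.
rewrite -mulr_suml in h1.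
have h3 := hd X hX.
have h4 : 0 <= \sum_(Y | ~~ Inv Y) trans G p k X Y by apply: sumr_ge0 => Y _; apply: trans_ge0.
have h5 : 0 <= \sum_(Y | Inv Y) trans G p k X Y by apply: sumr_ge0 => Y _; apply: trans_ge0.
rewrite -natr1.
case: (lerP 0 (1 - T%:R * dl)) => hT.
  have : (1 - dl) * (1 - T%:R * dl) <= (\sum_(Y | Inv Y) trans G p k X Y) * (1 - T%:R * dl).
    by apply: ler_wpM2r => //; lra.
  have : 0 <= T%:R * dl * dl :> R by apply: mulr_ge0 => //; apply: mulr_ge0.
  nra.
have : 0 <= \sum_(Y | Inv Y) trans G p k X Y * prob_always G p k good T Y.
  by apply: sumr_ge0 => Y _; apply: mulr_ge0; [apply: trans_ge0 | apply: pa_ge0].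
lra.
Qed.

Lemma geom_small (R : realType) (rho r : R) :
  0 < rho -> rho < 1 -> 0 < r -> exists H : nat, forall k, (H < k)%N -> rho ^+ k <= r.
Proof.
move=> r0 r1 rr.
have lr : ln rho < 0 by apply: ln_lt0; apply/andP.
set z := ln r / ln rho.
exists (Num.Def.archi_bound `|z|) => k hk.
have hz := archi_boundP (normr_ge0 z).
have hkz : z <= k%:R.
  apply: (le_trans (ler_norm z)); apply: ltW; apply: (lt_le_trans hz).
  by rewrite ler_nat; apply: ltnW.
have -> : rho ^+ k = expR (k%:R * ln rho).
  by rewrite expRM_natl lnK // posrE.
rewrite -[X in _ <= X](@lnK _ r); last by rewrite posrE.
rewrite ler_expR.
have : z * ln rho = ln r by rewrite /z mulrAC -mulrA divff ?mulr1 // lt_eqF.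
move=> <-; rewrite ler_wnM2r //; exact: ltW.
Qed.

Lemma inv_small (R : realType) (c : R) : 0 < c ->
  exists M : nat, (0 < M)%N /\ forall m : nat, (M <= m)%N -> m%:R^-1 <= c.
Proof.
move=> c0; exists (Num.Def.archi_bound c^-1).+1; split => // m hm.
have c1 : 0 <= c^-1 by rewrite invr_ge0 ltW.
have h := archi_boundP c1.
have hm' : c^-1 < m%:R.
  apply: (lt_le_trans h); rewrite ler_nat; apply: leq_trans hm; exact: leqnSn.
have mpos : (0 : R) < m%:R by apply: le_lt_trans hm'; rewrite invr_ge0 ltW.
rewrite -[X in _ <= X]invrK lef_pV2 ?posrE ?invr_gt0 //; exact: ltW.
Qed.

Lemma rho_props (R : realType) (s : R) : 0 < s -> s < 2^-1 ->
  let x := (2 * s)^-1 in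
  1 <= x /\ 0 < (1 + (x ^+ 2 - 1) * s) / x < 1.
Proof.
move=> s0 s1 x.
have hx : x * s = 2^-1 by rewrite /x invfM mulrAC -mulrA divff ?mulr1 // gt_eqF.
have x0 : 0 < x by rewrite /x invr_gt0; lra.
have x1 : 1 < x.
  rewrite /x -[X in X < _]invr1 ltf_pV2 ?posrE; lra.
split; first by apply: ltW.
have e : (x ^+ 2 - 1) * s = x / 2 - s.
  rewrite mulrBl mul1r expr2 -mulrA hx; ring.
rewrite e; apply/andP; split.
  apply: divr_gt0 => //; lra.
rewrite ltr_pdivrMr // mul1r.
(* 1 + x/2 - s < x  <=> 2 - 2s < x ; s*(2-2s) < 1/2 = x s *)
have : s * (2 - 2 * s) < x * s.
  rewrite hx. have : 0 < (2 * s - 1) * (2 * s - 1) by nra.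
  nra.
nra.
Qed.

Lemma base_34 (R : realType) (m : nat) :
  0 < ((2 : R) ^+ m.+1)^-1 /\ (1 + ((2 : R) ^+ m.+1)^-1 * (2 ^+ m - 1)) / 2 <= 3 / 4.
Proof.
have t0 : (0 : R) < 2 ^+ m by apply: exprn_gt0.
split; first by rewrite invr_gt0 exprn_gt0.
rewrite exprS invfM.
have : (2 ^+ m)^-1 * (2 ^+ m) = 1 :> R by rewrite mulVf // gt_eqF.
have : 0 < (2 ^+ m : R)^-1 by rewrite invr_gt0.
move: (2 ^+ m : R)^-1 t0 => y t0 y0 hy.
rewrite mulrBr. nra.
Qed.

Lemma decay (R : realType) (d n : nat) (Cp : R) :
  0 < - ln (3 / 4 : R) /\
  ((Cp / (- ln (3 / 4 : R))) * ln (n%:R : R) <= d%:R -> (3 / 4 : R) ^+ d <= expR (- (Cp * ln (n%:R : R)))).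
Proof.
have L0 : 0 < - ln (3 / 4 : R).
  rewrite oppr_gt0; apply: ln_lt0; apply/andP; split; lra.
split => // h.
have -> : (3 / 4 : R) ^+ d = expR (d%:R * ln (3 / 4 : R)).
  by rewrite expRM_natl lnK // posrE; lra.
rewrite ler_expR.
move: L0 h; set L := - ln (3 / 4 : R) => L0 h.
have -> : ln (3 / 4 : R) = - L by rewrite /L opprK.
have : Cp * ln (n%:R : R) <= d%:R * L.
  by rewrite -ler_pdivrMr // mulrAC.
lra.
Qed.

Lemma powR_expR (R : realType) (n : nat) (K : R) : (0 < n)%N ->
  powR (n%:R) K = expR (K * ln (n%:R : R)).
Proof. by move=> n0; rewrite /powR pnatr_eq0; case: eqP => // e; move: n0; rewrite e. Qed.

Lemma final_arith (R : realType) (n : nat) (K : R) : (0 < n)%N ->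
  expR (K * ln (n%:R : R)) * (n%:R * expR (- ((K + 2) * ln (n%:R : R)))) = n%:R^-1.
Proof.
move=> n0.
have hn : n%:R = expR (ln (n%:R : R)) by rewrite lnK // posrE ltr0n.
rewrite [X in _ * (X * _)]hn -!expRD.
have -> : K * ln (n%:R : R) + (ln (n%:R : R) + - ((K + 2) * ln (n%:R : R))) = - ln (n%:R : R) by ring.
by rewrite expRN -hn.
Qed.

Lemma pb_le_r (R : realType) (s0 q r : R) (k : nat) :
  0 < s0 -> s0 < 2^-1 -> 0 <= q -> q <= s0 ->
  ((1 + (((2 * s0)^-1) ^+ 2 - 1) * s0) / (2 * s0)^-1) ^+ k <= r ->
  (1 + (((2 * s0)^-1) ^+ 2 - 1) * q) ^+ k / ((2 * s0)^-1) ^+ k <= r.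
Proof.
move=> s0p s0h q0 qs h.
have [x1 _] := rho_props s0p s0h.
move: x1 h; set x := (2 * s0)^-1 => x1 h.
apply: le_trans h; rewrite expr_div_n; apply: ler_wpM2r.
  by rewrite invr_ge0 exprn_ge0 //; lra.
have hx : 0 <= x ^+ 2 - 1.
  rewrite subr_ge0 expr2; nra.
apply: lerXn2r; rewrite ?nnegrE.
- by apply: addr_ge0 => //; apply: mulr_ge0.
- apply: addr_ge0 => //; apply: mulr_ge0 => //; lra.
- by apply: lerD => //; apply: ler_wpM2l.
Qed.

Lemma node_bound (R : realType) (m d n : nat) (Cp : R) :
  (Cp / (- ln (3 / 4 : R))) * ln (n%:R : R) <= d%:R ->
  ((1 + ((2 : R) ^+ m.+1)^-1 * (2 ^+ m - 1)) / 2) ^+ d <= expR (- (Cp * ln (n%:R : R))).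
Proof.
move=> h; have [_ hd] := decay d n Cp.
apply: le_trans (hd h).
have [r0 r34] := base_34 R m.
apply: lerXn2r; rewrite ?nnegrE //.
apply: divr_ge0; last by lra.
apply: addr_ge0 => //; apply: mulr_ge0; first exact: ltW.
rewrite subr_ge0; apply: exprn_ege1; lra.
Qed.

Lemma slow_case (R : realType) (p : R) (hp0 : 0 <= p) (hp1 : p <= 1)
  (gamma : R) (hgamma : 0 < gamma) (hp : p < 2^-1) :
  exists H : nat,
  forall G : forall n : nat, rel 'I_n,
    (forall n, simple_graph (G n)) ->
    (forall C : R, 0 < C -> exists N : nat, forall n : nat, (N <= n)%N ->
        forall u : 'I_n, C * ln (n%:R) <= (deg (G n) u)%:R) ->
     forall k : nat, (H < k)%N -> forall K : R, 0 < K ->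
       forall eps : R, 0 < eps -> exists N : nat, forall n : nat, (N <= n)%N ->
         1 - eps <= prob_always (G n) p k
                      (fun X => 1 - gamma <= vol_frac R (G n) (~: X))
                      (Num.truncn (powR (n%:R) K)) (finset.set0 : {set 'I_n}).
Proof.
have [M1 [M1p hM1]] := inv_small hgamma.
have hc : 0 < (2^-1 - p) / 2 by lra.
have [M2 [M2p hM2]] := inv_small hc.
set m := maxn M1 M2.
have m0 : (0 < m)%N by apply: leq_trans M1p (leq_maxl _ _).
have hmg : m%:R^-1 <= gamma := hM1 m (leq_maxl _ _).
have hmp : m%:R^-1 <= (2^-1 - p) / 2 := hM2 m (leq_maxr _ _).
set s0 := (p + 2^-1) / 2.
have s0p : 0 < s0 by rewrite /s0; lra.
have s0h : s0 < 2^-1 by rewrite /s0; lra.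
have [x1 /andP[rho0 rho1]] := rho_props s0p s0h.
have [r0 r34] := base_34 R m.
have [H hH] := geom_small rho0 rho1 r0.
exists H => G sg hdeg k hk K K0 eps eps0.
have [L0 _] := decay 0 0 (0 : R).
have [N0 hN0] := hdeg ((K + 2) / (- ln (3 / 4 : R))) (divr_gt0 (ltr_wpDl (ltW K0) (ltr0n _ 2)) L0).
have [Ne [Nep hNe]] := inv_small eps0.
exists (maxn N0 (maxn Ne 2)) => n hn.
have n2 : (2 <= n)%N by move: hn; rewrite !geq_max => /and3P[].
have nN0 : (N0 <= n)%N by move: hn; rewrite !geq_max => /and3P[].
have nNe : (Ne <= n)%N by move: hn; rewrite !geq_max => /and3P[].
have n0 : (0 < n)%N by apply: leq_trans n2.
have hlog : 0 < ln (n%:R : R) by apply: ln_gt0; rewrite ltr1n.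
have hd := hN0 n nN0.
have dpos : forall u, (0 < deg (G n) u)%N.
  move=> u; rewrite -(ltr0n R); apply: lt_le_trans (hd u).
  apply: mulr_gt0 => //; apply: divr_gt0 => //; lra.
have vpos : (0 < vol (G n) [set: 'I_n])%N.
  rewrite /vol (bigD1 (Ordinal n0)) ?finset.in_setT //=.
  by apply: leq_trans (dpos (Ordinal n0)) (leq_addr _ _).
set Inv := fun X : {set 'I_n} => [forall u, ~~ (deg (G n) u <= m * #|nbhd (G n) u :&: X|)%N].
set dl := n%:R * expR (- ((K + 2) * ln (n%:R : R))).
have dl0 : 0 <= dl by apply: mulr_ge0 => //; apply: expR_ge0.
have hgood : forall X, Inv X -> 1 - gamma <= vol_frac R (G n) (~: X).
  move=> X /forallP hX.
  have := @vol_frac_bound R n (G n) X m (sg n) vpos m0.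
  have h : forall u, (m * #|nbhd (G n) u :&: X| <= deg (G n) u)%N.
    by move=> u; have := hX u; rewrite -ltnNge => /ltnW.
  move=> /(_ h); lra.
have hdl : forall X, Inv X -> \sum_(Y | ~~ Inv Y) trans (G n) p k X Y <= dl.
  move=> X /forallP hX.
  have hpb : forall v, prob_blue (G n) p k X v <= 2 ^- m.+1.
    move=> v.
    apply: le_trans (pb_blue_tail k X hp0 hp1 (dpos v) x1) _.
    apply: pb_le_r => //; last exact: hH.
    - rewrite sw_blue //; apply: addr_ge0 => //; apply: mulr_ge0; first by lra.
      by apply: divr_ge0.
    rewrite sw_blue //.
    have hv := hX v; rewrite -ltnNge in hv.
    have hcd : (#|nbhd (G n) v :&: X|%:R / (deg (G n) v)%:R : R) <= m%:R^-1.
      rewrite ler_pdivrMr ?ltr0n // mulrC ler_pdivlMr ?ltr0n // -natrM ler_nat mulnC.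
      exact: ltnW.
    have hcd0 : (0 : R) <= #|nbhd (G n) v :&: X|%:R / (deg (G n) v)%:R by apply: divr_ge0.
    have : (1 - p) * (#|nbhd (G n) v :&: X|%:R / (deg (G n) v)%:R) <= 
           (#|nbhd (G n) v :&: X|%:R / (deg (G n) v)%:R : R).
      rewrite -[X in _ <= X]mul1r; apply: ler_wpM2r => //; lra.
    rewrite /s0; lra.
  have hF : forall Y, 0 <= trans (G n) p k X Y by move=> Y; apply: trans_ge0.
  apply: le_trans (@union_bound R _ _ (fun u Y => (deg (G n) u <= m * #|nbhd (G n) u :&: Y|)%N) _ hF) _.
  have -> : dl = \sum_(u < n) expR (- ((K + 2) * ln (n%:R : R))).
    by rewrite sumr_const card_ord /dl mulr_natl.
  apply: ler_sum => u _.
  apply: le_trans (chern_blue u m hp0 hp1 dpos hpb) _.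
  exact: node_bound.
have hInv0 : Inv finset.set0.
  by apply/forallP => u; rewrite finset.setI0 cards0 muln0 -ltnNge.
apply: le_trans (pa_bound hp0 hp1 dpos dl0 hgood hdl _ hInv0).
have hT : (Num.truncn (powR (n%:R) K))%:R * dl <= n%:R^-1.
  rewrite -(final_arith K n0) /dl -powR_expR //; apply: ler_wpM2r => //.
  by rewrite truncn_le powR_ge0.
have : (n%:R : R)^-1 <= eps by apply: hNe.
lra.
Qed.

Lemma fast_case (R : realType) (p : R) (hp0 : 0 <= p) (hp1 : p <= 1)
  (gamma : R) (hgamma : 0 < gamma) (hp : 2^-1 < p) :
  exists H : nat,
  forall G : forall n : nat, rel 'I_n,
    (forall n, simple_graph (G n)) ->
    (forall C : R, 0 < C -> exists N : nat, forall n : nat, (N <= n)%N ->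
        forall u : 'I_n, C * ln (n%:R) <= (deg (G n) u)%:R) ->
     forall k : nat, (H < k)%N ->
       forall eps : R, 0 < eps -> exists N : nat, forall n : nat, (N <= n)%N ->
         1 - eps <= prob_round1 (G n) p k
                      (fun Y => 1 - gamma <= vol_frac R (G n) Y) (finset.set0 : {set 'I_n}).
Proof.
have [m [m0 hM1]] := inv_small hgamma.
have hmg : m%:R^-1 <= gamma := hM1 m (leqnn _).
set s0 := (1 - p + 2^-1) / 2.
have s0p : 0 < s0 by rewrite /s0; lra.
have s0h : s0 < 2^-1 by rewrite /s0; lra.
have [x1 /andP[rho0 rho1]] := rho_props s0p s0h.
have [r0 r34] := base_34 R m.
have [H hH] := geom_small rho0 rho1 r0.
exists H => G sg hdeg k hk eps eps0.
have [L0 _] := decay 0 0 (0 : R).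
have [N0 hN0] := hdeg ((0 + 2) / (- ln (3 / 4 : R))) (divr_gt0 (ltr_wpDl (lexx 0) (ltr0n _ 2)) L0).
have [Ne [Nep hNe]] := inv_small eps0.
exists (maxn N0 (maxn Ne 2)) => n hn.
have n2 : (2 <= n)%N by move: hn; rewrite !geq_max => /and3P[].
have nN0 : (N0 <= n)%N by move: hn; rewrite !geq_max => /and3P[].
have nNe : (Ne <= n)%N by move: hn; rewrite !geq_max => /and3P[].
have n0 : (0 < n)%N by apply: leq_trans n2.
have hlog : 0 < ln (n%:R : R) by apply: ln_gt0; rewrite ltr1n.
have hd := hN0 n nN0.
have dpos : forall u, (0 < deg (G n) u)%N.
  move=> u; rewrite -(ltr0n R); apply: lt_le_trans (hd u).
  apply: mulr_gt0 => //; apply: divr_gt0 => //; lra.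
have vpos : (0 < vol (G n) [set: 'I_n])%N.
  rewrite /vol (bigD1 (Ordinal n0)) ?finset.in_setT //=.
  by apply: leq_trans (dpos (Ordinal n0)) (leq_addr _ _).
set Inv := fun Y : {set 'I_n} => [forall u, ~~ (deg (G n) u <= m * #|nbhd (G n) u :&: ~: Y|)%N].
set dl := n%:R * expR (- ((0 + 2) * ln (n%:R : R))).
have hE : forall Y, Inv Y -> 1 - gamma <= vol_frac R (G n) Y.
  move=> Y /forallP hY.
  have := @vol_frac_bound R n (G n) (~: Y) m (sg n) vpos m0.
  have h : forall u, (m * #|nbhd (G n) u :&: ~: Y| <= deg (G n) u)%N.
    by move=> u; have := hY u; rewrite -ltnNge => /ltnW.
  move=> /(_ h); rewrite finset.setCK; lra.
have hpr : forall v, 1 - prob_blue (G n) p k finset.set0 v <= 2 ^- m.+1.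
  move=> v.
  apply: le_trans (pb_red_tail k finset.set0 hp0 hp1 (dpos v) x1) _.
  apply: pb_le_r => //; last exact: hH.
  - by rewrite sw_blue // finset.setI0 cards0 mul0r mulr0 addr0; lra.
  by rewrite sw_blue // finset.setI0 cards0 mul0r mulr0 addr0 /s0; lra.
have hF : forall Y, 0 <= trans (G n) p k finset.set0 Y by move=> Y; apply: trans_ge0.
have hdl : \sum_(Y | ~~ Inv Y) trans (G n) p k finset.set0 Y <= dl.
  apply: le_trans (@union_bound R _ _ (fun u Y => (deg (G n) u <= m * #|nbhd (G n) u :&: ~: Y|)%N) _ hF) _.
  have -> : dl = \sum_(u < n) expR (- ((0 + 2) * ln (n%:R : R))).
    by rewrite sumr_const card_ord /dl mulr_natl.
  apply: ler_sum => u _.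
  apply: le_trans (chern_red u m hp0 hp1 dpos hpr) _.
  exact: node_bound.
have hs := trans_sum1 (G n) p k finset.set0.
rewrite (bigID Inv) /= in hs.
have h1 : \sum_(Y | Inv Y) trans (G n) p k finset.set0 Y <=
          prob_round1 (G n) p k (fun Y => 1 - gamma <= vol_frac R (G n) Y) finset.set0.
  rewrite /prob_round1 [X in _ <= X]big_mkcond [X in X <= _]big_mkcond /=. apply: (@ler_sum _ _ _ _ (fun Y => if Inv Y then trans (G n) p k finset.set0 Y else 0)) => Y _.
  case: ifP => hY; first by rewrite ifT //; apply: hE.
  by case: ifP.
have hdn : dl = n%:R^-1.
  by rewrite -(final_arith 0 n0) mul0r expR0 mul1r.
have : (n%:R : R)^-1 <= eps by apply: hNe.
lra.
Qed.

Unset Implicit Arguments. Set Strict Implicit.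

Theorem proposition6p4 (R : realType) (p : R) (hp0 : 0 <= p) (hp1 : p <= 1)
  (gamma : R) (hgamma : 0 < gamma) :
  exists H : nat,
  forall G : forall n : nat, rel 'I_n,
    (forall n, simple_graph (G n)) ->
    (* min degree = omega(log n) *)
    (forall C : R, 0 < C -> exists N : nat, forall n : nat, (N <= n)%N ->
        forall u : 'I_n, C * ln (n%:R) <= (deg (G n) u)%:R) ->
    ((* Fast disruption *)
     p > 2^-1 ->
     forall k : nat, (H < k)%N ->
       forall eps : R, 0 < eps -> exists N : nat, forall n : nat, (N <= n)%N ->
         1 - eps <= prob_round1 (G n) p k
                      (fun Y => 1 - gamma <= vol_frac R (G n) Y) (finset.set0 : {set 'I_n}))
    /\
    ((* Slow disruption *)
     p < 2^-1 ->
     forall k : nat, (H < k)%N -> forall K : R, 0 < K ->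
       forall eps : R, 0 < eps -> exists N : nat, forall n : nat, (N <= n)%N ->
         1 - eps <= prob_always (G n) p k
                      (fun X => 1 - gamma <= vol_frac R (G n) (~: X))
                      (Num.truncn (powR (n%:R) K)) (finset.set0 : {set 'I_n})).
Proof.
case: (ltrgtP p (2^-1)) => hp.
- have [H hH] := slow_case hp0 hp1 hgamma hp.
  exists H => G sg hdeg; split; first by move=> h; exfalso; lra.
  by move=> _; exact: hH G sg hdeg.
- have [H hH] := fast_case hp0 hp1 hgamma hp.
  exists H => G sg hdeg; split; last by move=> h; exfalso; lra.
  by move=> _; exact: hH G sg hdeg.
- exists 0%N => G _ _; split => h; exfalso; lra.
Qed.
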